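(* Let $\alpha\in(0,1)$ and $\delta>0$. For all $t,s\in\delta\mathbb Z\setminus\{0\}$, writing $t'=t-\frac\delta2\mathrm{sgn}(t)$ and $s'=s-\frac\delta2\mathrm{sgn}(s)$, $$\mathrm{Cov}\Big(\frac{\sqrt2B_\alpha(t')}{|t'|^{\alpha/2}},\frac{\sqrt2B_\alpha(s')}{|s'|^{\alpha/2}}\Big)\le\mathrm{Cov}\Big(\frac{\sqrt2B_\alpha(t)}{|t|^{\alpha/2}},\frac{\sqrt2B_\alpha(s)}{|s|^{\alpha/2}}\Big).$$
   Context: $B_\alpha$ is fractional Brownian motion with $\mathrm{Cov}(B_\alpha(t),B_\alpha(s))=\frac{|t|^\alpha+|s|^\alpha-|t-s|^\alpha}{2}$, $t,s\in\mathbb R$; $\mathrm{sgn}$ is the sign function. *)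

(* Defs.v *)
From HB Require Import structures.
From mathcomp Require Import all_boot all_order all_algebra.
From mathcomp Require Import all_classical all_reals all_analysis.
Set Implicit Arguments. Unset Strict Implicit. Unset Printing Implicit Defensive.
Import Order.TTheory GRing.Theory Num.Theory.
Local Open Scope ring_scope.

Definition fbm_cov {R : realType} (alpha t s : R) : R :=
  (`|t| `^ alpha + `|s| `^ alpha - `|t - s| `^ alpha) / 2.

(* B : R -> (T -> R) is a fractional Brownian motion with parameter alpha on
   the probability space P, as far as second-order structure is concerned:
   each B t is a (measurable) square-integrable random variable, centered,
   with the fBm covariance. *)
Definition is_fBm {d} {T : measurableType d} {R : realType}
    (P : probability T R) (alpha : R) (B : R -> T -> R) : Prop :=
  (forall t, B t \in Lfun P 2%:E) /\
  (forall t, ('E_P[B t])%E = 0%E) /\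
  (forall t s, covariance P (B t) (B s) = (fbm_cov alpha t s)%:E).

Definition in_lattice_nz {R : realType} (delta t : R) : Prop :=
  exists k : int, k != 0 /\ t = k%:~R * delta.

Definition shift_half {R : realType} (delta t : R) : R :=
  t - delta / 2 * Num.sg t.

Definition normB {T : Type} {R : realType} (alpha : R) (B : R -> T -> R) (t : R)
  : T -> R :=
  fun w => Num.sqrt 2 * B t w / `|t| `^ (alpha / 2).

(* Main.v *)
Require Import Defs.
From HB Require Import structures.
From mathcomp Require Import all_boot all_order all_algebra.
From mathcomp Require Import all_classical all_reals all_analysis.
From mathcomp Require Import ring lra.
Import Order.TTheory GRing.Theory Num.Theory.
Local Open Scope ring_scope.
Section S.
Context {R : realType}.

Lemma mono_deriv (g : R -> R) (lo hi r1 r2 : R) :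
  (forall x, lo < x -> x < hi -> exists2 d, is_derive x 1 g d & 0 <= d) ->
  lo < r1 -> r1 <= r2 -> r2 < hi -> g r1 <= g r2.
Proof.
move=> H l1 r12 r2h.
have H' x : lo < x -> x < hi -> is_derive x 1 g ('D_1 g x) /\ 0 <= 'D_1 g x.
  move=> a b; have [dd Dd dd0] := H x a b.
  by rewrite (@derive_val _ _ _ _ _ _ _ Dd).
have inI x : x \in `[r1, r2] -> lo < x /\ x < hi.
  by rewrite in_itv /= => /andP[a b]; split; [exact: lt_le_trans a|exact: le_lt_trans r2h].
have inO x : x \in `]r1, r2[ -> x \in `[r1, r2].
  by rewrite !in_itv /= => /andP[a b]; rewrite (ltW a) (ltW b).
have [||c cI eq] := @MVT_segment R g (fun x => 'D_1 g x) r1 r2 r12.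
- move=> x /inO /inI [a b]; exact: (H' x a b).1.
- apply: derivable_within_continuous => x /inI [a b].
  by have [[]] := H' x a b.
rewrite -subr_ge0 eq; apply: mulr_ge0; last by rewrite subr_ge0.
by have [a b] := inI c cI; exact: (H' c a b).2.
Qed.

Lemma powR_lnb (x p : R) : 0 < x -> 1 + p * ln x <= x `^ p.
Proof. by move=> x0; rewrite /powR gt_eqF // mulrC; exact: expR_ge1Dx. Qed.

Lemma ln_le_sub1 (x : R) : 0 < x -> ln x <= x - 1.
Proof.
move=> x0; have := expR_ge1Dx (ln x); rewrite lnK ?posrE //; lra.
Qed.

Definition g1 (a r : R) := r `^ (-(a/2)) * (r `^ a + 1 - (1 - r) `^ a).

Lemma g1_deriv (a r : R) : 0 < a -> a < 1 -> 0 < r -> r < 1 ->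
  exists2 d, is_derive r 1 (g1 a) d & 0 <= d.
Proof.
move=> a0 a1 r0 r1.
have r1' : 0 < 1 - r by lra.
have D1 : is_derive r 1 (cst 1 - id : R -> R) (-1).
  have := is_deriveB (is_derive_cst (1:R) r 1) (is_derive_id r 1). by rewrite sub0r.
have D2 : is_derive r 1 ((fun x : R => x `^ a) \o (cst 1 - id)) (a * (1 - r) `^ (a - 1) * -1).
  by apply: is_derive1_comp => //; exact: is_derive1_powR.
have P0 := is_derive1_powR (-(a/2)) r0.
have Pa := is_derive1_powR a r0.
have S := is_deriveB (is_deriveD Pa (is_derive_cst (1:R) r 1)) D2.
have M := is_deriveM P0 S.
move: M; set F := (X in is_derive _ _ X _) => M.
have E : F = g1 a by apply/funeqP => x.
rewrite E in M.
eexists; first exact: M.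
rewrite /= /GRing.scale /=.
have ha : r `^ a = r * r `^ (a - 1) by rewrite mulr_powRB1 // ltW.
have hc : (1 - r) `^ a = (1 - r) * (1 - r) `^ (a - 1) by rewrite mulr_powRB1 // ltW.
have hp : r `^ (- (a / 2)) = r * r `^ (- (a / 2) - 1).
  rewrite -{2}(powRr1 (ltW r0)) -powRD; last by apply/implyP => _; rewrite gt_eqF.
  by congr (_ `^ _); ring.
have q1 : 1 <= r `^ (a - 1).
  have := powR_lnb r (a - 1) r0; have := ln_le0 (ltW r1); nra.
have w1 : 1 <= (1 - r) `^ (a - 1).
  have := powR_lnb (1 - r) (a - 1) r1'; have : ln (1 - r) <= 0 by apply: ln_le0; lra.
  nra.
have pp : 0 < r `^ (- (a / 2) - 1) by apply: powR_gt0.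
have -> : ((powR (R:=R))^~ a + cst 1 - ((powR (R:=R))^~ a \o (cst 1 - id))) r = r `^ a + 1 - (1 - r) `^ a by [].
rewrite ha hc hp.
move: pp q1 w1; set p := r `^ (- (a / 2) - 1); set q := r `^ (a - 1); set w := (1 - r) `^ (a - 1) => pp q1 w1.
have -> : r * p * (a * q + 0 - a * w * -1) +
  (r * q + 1 - (1 - r) * w) * (- (a / 2) * p) = (a * p / 2) * (r * q - 1 + (1 + r) * w) by field.
apply: mulr_ge0; first by apply: divr_ge0; [apply: mulr_ge0; apply: ltW|].
have : 0 <= r * (q - 1) by apply: mulr_ge0; lra.
have : 0 <= (1 + r) * (w - 1) by apply: mulr_ge0; lra.
lra.
Qed.
Definition g2 (a r : R) := r `^ (-(a/2)) * (r `^ a + 1 - (1 + r) `^ a).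

Lemma g2_deriv (a r : R) : 0 < a -> a < 1 -> 0 < r -> r < 1 ->
  exists2 d, is_derive r 1 (g2 a) d & 0 <= d.
Proof.
move=> a0 a1 r0 r1.
have r1' : 0 < 1 + r by lra.
have D1 : is_derive r 1 (cst 1 + id : R -> R) 1.
  have := is_deriveD (is_derive_cst (1:R) r 1) (is_derive_id r 1). by rewrite add0r.
have D2 : is_derive r 1 ((fun x : R => x `^ a) \o (cst 1 + id)) (a * (1 + r) `^ (a - 1) * 1).
  by apply: is_derive1_comp => //; exact: is_derive1_powR.
have P0 := is_derive1_powR (-(a/2)) r0.
have Pa := is_derive1_powR a r0.
have S := is_deriveB (is_deriveD Pa (is_derive_cst (1:R) r 1)) D2.
have M := is_deriveM P0 S.
move: M; set F := (X in is_derive _ _ X _) => M.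
have E : F = g2 a by apply/funeqP => x.
rewrite E in M.
eexists; first exact: M.
rewrite /= /GRing.scale /=.
have ha : r `^ a = r * r `^ (a - 1) by rewrite mulr_powRB1 // ltW.
have hc : (1 + r) `^ a = (1 + r) * (1 + r) `^ (a - 1) by rewrite mulr_powRB1 // ltW.
have hp : r `^ (- (a / 2)) = r * r `^ (- (a / 2) - 1).
  rewrite -{2}(powRr1 (ltW r0)) -powRD; last by apply/implyP => _; rewrite gt_eqF.
  by congr (_ `^ _); ring.
have q1 : 1 + (1 - a) * (1 - r) <= r `^ (a - 1).
  have L1 := powR_lnb r (a - 1) r0; have L2 := @ln_le_sub1 r r0.
  have : 0 <= (1 - a) * (r - 1 - ln r) by apply: mulr_ge0; lra.
  lra.
have w1 : 1 + (a - 1) * r <= (1 + r) `^ (a - 1).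
  have L1 := powR_lnb (1 + r) (a - 1) r1'; have L2 := @ln_le_sub1 (1 + r) r1'.
  have : 0 <= (1 - a) * (r - ln (1 + r)) by apply: mulr_ge0; lra.
  lra.
have pp : 0 < r `^ (- (a / 2) - 1) by apply: powR_gt0.
have -> : ((powR (R:=R))^~ a + cst 1 - ((powR (R:=R))^~ a \o (cst 1 + id))) r = r `^ a + 1 - (1 + r) `^ a by [].
rewrite ha hc hp.
move: pp q1 w1; set p := r `^ (- (a / 2) - 1); set q := r `^ (a - 1); set w := (1 + r) `^ (a - 1) => pp q1 w1.
have -> : r * p * (a * q + 0 - a * w * 1) +
  (r * q + 1 - (1 + r) * w) * (- (a / 2) * p) = (a * p / 2) * (r * q - 1 + (1 - r) * w) by field.
apply: mulr_ge0; first by apply: divr_ge0; [apply: mulr_ge0; apply: ltW|].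
have : 0 <= r * (q - (1 + (1 - a) * (1 - r))) by apply: mulr_ge0; lra.
have : 0 <= (1 - r) * (w - (1 + (a - 1) * r)) by apply: mulr_ge0; lra.
lra.
Qed.

Definition H1 (a p q : R) := (p `^ a + q `^ a - `|p - q| `^ a) / (p `^ (a/2) * q `^ (a/2)).
Definition H2 (a p q : R) := (p `^ a + q `^ a - (p + q) `^ a) / (p `^ (a/2) * q `^ (a/2)).

Lemma half_sq (q a : R) : 0 < q -> q `^ a = q `^ (a/2) * q `^ (a/2).
Proof.
move=> q0; rewrite -powRD; last by apply/implyP => _; rewrite gt_eqF.
by congr (_ `^ _); field.
Qed.

Lemma H1_g1 a p q : 0 < p -> 0 < q -> p <= q -> H1 a p q = g1 a (p / q).
Proof.
move=> p0 q0 pq.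
have hp : p = (p / q) * q by field; rewrite gt_eqF.
have r0 : 0 < p / q by apply: divr_gt0.
have r1 : p / q <= 1 by rewrite ler_pdivrMr // mul1r.
suff K : forall r, 0 < r -> r <= 1 -> H1 a (r * q) q = g1 a r.
  by rewrite {1}hp; apply: K.
move=> {hp r0 r1} r r0 r1; rewrite /H1.
have -> : `|r * q - q| = (1 - r) * q.
  rewrite ler0_norm; first ring. by rewrite subr_le0 -{2}(mul1r q) ler_pM2r.
rewrite !powRM ?(ltW r0) ?(ltW q0) //; last lra.
rewrite /g1 powRN (@half_sq q a q0) (@half_sq r a r0).
set u := r `^ (a/2); set v := q `^ (a/2).
have u0 : u != 0 by rewrite gt_eqF // powR_gt0.
have v0 : v != 0 by rewrite gt_eqF // powR_gt0.
field; by rewrite u0 v0.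
Qed.

Lemma H2_g2 a p q : 0 < p -> 0 < q -> H2 a p q = g2 a (p / q).
Proof.
move=> p0 q0.
have hp : p = (p / q) * q by field; rewrite gt_eqF.
have r0 : 0 < p / q by apply: divr_gt0.
suff K : forall r, 0 < r -> H2 a (r * q) q = g2 a r.
  by rewrite {1}hp; apply: K.
move=> {hp r0} r r0; rewrite /H2.
have -> : r * q + q = (1 + r) * q by ring.
rewrite !powRM ?(ltW r0) ?(ltW q0) //; last lra.
rewrite /g2 powRN (@half_sq q a q0) (@half_sq r a r0).
set u := r `^ (a/2); set v := q `^ (a/2).
have u0 : u != 0 by rewrite gt_eqF // powR_gt0.
have v0 : v != 0 by rewrite gt_eqF // powR_gt0.
field; by rewrite u0 v0.
Qed.

Lemma ratio_le (h p q : R) : 0 < h -> h < p -> p <= q -> (p - h) / (q - h) <= p / q.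
Proof.
move=> h0 hp pq.
rewrite ler_pdivrMr; last lra.
rewrite mulrAC ler_pdivlMr; last lra.
nra.
Qed.

Lemma H1_core (a h p q : R) : 0 < a -> a < 1 -> 0 < h -> h < p -> p <= q ->
  H1 a (p - h) (q - h) <= H1 a p q.
Proof.
move=> a0 a1 h0 hp pq.
rewrite H1_g1 ?H1_g1 //; try lra.
have [->|pq'] := eqVneq p q.
  by rewrite !divff // gt_eqF //; lra.
have lt : p < q by rewrite lt_neqAle pq'.
apply: (@mono_deriv _ 0 1).
- by move=> x x0 x1; apply: g1_deriv.
- by apply: divr_gt0; lra.
- exact: ratio_le.
- by rewrite ltr_pdivrMr ?mul1r //; lra.
Qed.

Lemma H2_core (a h p q : R) : 0 < a -> a < 1 -> 0 < h -> h < p -> p <= q ->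
  H2 a (p - h) (q - h) <= H2 a p q.
Proof.
move=> a0 a1 h0 hp pq.
rewrite H2_g2 ?H2_g2 //; try lra.
have [->|pq'] := eqVneq p q.
  by rewrite !divff // gt_eqF //; lra.
have lt : p < q by rewrite lt_neqAle pq'.
apply: (@mono_deriv _ 0 1).
- by move=> x x0 x1; apply: g2_deriv.
- by apply: divr_gt0; lra.
- exact: ratio_le.
- by rewrite ltr_pdivrMr ?mul1r //; lra.
Qed.

Lemma H1C a p q : H1 a p q = H1 a q p.
Proof. by rewrite /H1 distrC (addrC (p `^ a)) (mulrC (p `^ _)). Qed.

Lemma H2C a p q : H2 a p q = H2 a q p.
Proof. by rewrite /H2 (addrC p) (addrC (p `^ a)) (mulrC (p `^ _)). Qed.

Lemma H1_main (a h p q : R) : 0 < a -> a < 1 -> 0 < h -> h < p -> h < q ->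
  H1 a (p - h) (q - h) <= H1 a p q.
Proof.
move=> a0 a1 h0 hp hq; have [pq|qp] := lerP p q; first exact: H1_core.
by rewrite H1C (H1C a p); apply: H1_core => //; exact: ltW.
Qed.

Lemma H2_main (a h p q : R) : 0 < a -> a < 1 -> 0 < h -> h < p -> h < q ->
  H2 a (p - h) (q - h) <= H2 a p q.
Proof.
move=> a0 a1 h0 hp hq; have [pq|qp] := lerP p q; first exact: H2_core.
by rewrite H2C (H2C a p); apply: H2_core => //; exact: ltW.
Qed.
End S.

Lemma cov_scale (d : measure_display) (T : measurableType d) (R : realType)
    (P : probability T R) (X Y : T -> R) (k l : R) :
  X \in Lfun P 2%:E -> Y \in Lfun P 2%:E ->
  covariance P (fun w => X w * k) (fun w => Y w * l) = ((k * l)%:E * covariance P X Y)%E.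
Proof.
move=> X2 Y2.
have fin : (P setT \is a fin_num)%E by rewrite probability_setT.
have X1 := Lfun_subset12 fin X2.
have Y1 := Lfun_subset12 fin Y2.
have lY2 : (l \o* Y)%R \in Lfun P 2%:E by apply: Lfun_scale => //; rewrite ler1n.
have lY1 := Lfun_subset12 fin lY2.
have -> : (fun w => X w * k) = (k \o* X)%R by [].
have -> : (fun w => Y w * l) = (l \o* Y)%R by [].
rewrite covarianceZl //; last exact: Lfun2_mul_Lfun1.
rewrite covarianceZr //; last exact: Lfun2_mul_Lfun1.
by rewrite muleA EFinM.
Qed.

Definition G {R : realType} (a t s : R) :=
  (`|t| `^ a + `|s| `^ a - `|t - s| `^ a) / (`|t| `^ (a / 2) * `|s| `^ (a / 2)).

Lemma cov_normB (d : measure_display) (T : measurableType d) (R : realType)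
    (P : probability T R) (alpha : R) (B : R -> T -> R) (t s : R) :
  is_fBm P alpha B -> t != 0 -> s != 0 ->
  covariance P (normB alpha B t) (normB alpha B s) = (G alpha t s)%:E.
Proof.
move=> [H2 [_ Hc]] t0 s0.
have E u : normB alpha B u = (fun w => B u w * (Num.sqrt 2 / `|u| `^ (alpha / 2))).
  by apply/funeqP => w; rewrite /normB mulrAC mulrC mulrA.
rewrite !E cov_scale // Hc -EFinM; congr (_%:E).
have ct : `|t| `^ (alpha / 2) != 0 by rewrite gt_eqF // powR_gt0 // normr_gt0.
have cs : `|s| `^ (alpha / 2) != 0 by rewrite gt_eqF // powR_gt0 // normr_gt0.
have s2 : Num.sqrt 2 * Num.sqrt 2 = 2 :> R.
  by rewrite -expr2 sqr_sqrtr // ler0n.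
rewrite /fbm_cov /G.
set x := Num.sqrt 2; set N := (_ + _ - _); set a := `|t| `^ _; set b := `|s| `^ _.
have -> : x / a * (x / b) * (N / 2) = (x * x) * N / (2 * (a * b)) by field; rewrite ?ct ?cs.
rewrite s2; field; by rewrite ct cs.
Qed.

Lemma G_pp {R : realType} (a t s : R) : 0 < t -> 0 < s -> G a t s = H1 a t s.
Proof. by move=> t0 s0; rewrite /G /H1 (gtr0_norm t0) (gtr0_norm s0). Qed.

Lemma G_nn {R : realType} (a t s : R) : t < 0 -> s < 0 -> G a t s = H1 a (-t) (-s).
Proof.
move=> t0 s0; rewrite /G /H1 (ltr0_norm t0) (ltr0_norm s0).
by rewrite -opprD normrN.
Qed.

Lemma G_pn {R : realType} (a t s : R) : 0 < t -> s < 0 -> G a t s = H2 a t (-s).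
Proof.
move=> t0 s0; rewrite /G /H2 (gtr0_norm t0) (ltr0_norm s0) gtr0_norm //; lra.
Qed.

Lemma G_np {R : realType} (a t s : R) : t < 0 -> 0 < s -> G a t s = H2 a (-t) s.
Proof.
move=> t0 s0; rewrite /G /H2 (ltr0_norm t0) (gtr0_norm s0) ltr0_norm //; last lra.
by rewrite opprB (addrC (- t)).
Qed.

Lemma lattice_ge {R : realType} (delta t : R) : 0 < delta ->
  in_lattice_nz delta t -> delta / 2 < `|t|.
Proof.
move=> d0 [k [k0 ->]].
have k1 : 1 <= `|k%:~R : R|.
  by rewrite -intr_norm ler1z -gtz0_ge1 normr_gt0.
rewrite normrM (gtr0_norm d0).
have : delta <= `|k%:~R : R| * delta by rewrite ler_peMl // ltW.
lra.
Qed.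

Theorem mainTheorem7 (d : measure_display) (T : measurableType d) (R : realType)
    (P : probability T R) (alpha delta : R) (B : R -> T -> R) :
  0 < alpha -> alpha < 1 -> 0 < delta -> is_fBm P alpha B ->
  forall t s : R, in_lattice_nz delta t -> in_lattice_nz delta s ->
  (covariance P (normB alpha B (shift_half delta t)) (normB alpha B (shift_half delta s))
   <= covariance P (normB alpha B t) (normB alpha B s))%E.
Proof.
move=> a0 a1 d0 HB t s /(@lattice_ge R delta t d0) ht /(@lattice_ge R delta s d0) hs.
have h0 : 0 < delta / 2 by apply: divr_gt0.
rewrite /shift_half.
move: h0 ht hs; set h := delta / 2 => h0 ht hs.
have tnz : t != 0 by apply/eqP => t0; move: ht; rewrite t0 normr0; lra.
have snz : s != 0 by apply/eqP => s0; move: hs; rewrite s0 normr0; lra.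
have sc (x : R) : x != 0 -> 0 < x \/ x < 0.
  by rewrite neq_lt => /orP[]; [right|left].
have [tp|tn] := sc t tnz; have [sp|sn] := sc s snz.
- rewrite !gtr0_sg // !mulr1 in ht hs *.
  rewrite (gtr0_norm tp) in ht; rewrite (gtr0_norm sp) in hs.
  rewrite !cov_normB //; try (apply/eqP; lra).
  rewrite lee_fin G_pp ?G_pp; try lra.
  exact: H1_main.
- rewrite gtr0_sg // ltr0_sg // mulr1 mulrN1 opprK.
  rewrite (gtr0_norm tp) in ht; rewrite (ltr0_norm sn) in hs.
  rewrite !cov_normB //; try (apply/eqP; lra).
  rewrite lee_fin G_pn ?G_pn; try lra.
  rewrite opprD; exact: H2_main.
- rewrite ltr0_sg // gtr0_sg // mulr1 mulrN1 opprK.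
  rewrite (ltr0_norm tn) in ht; rewrite (gtr0_norm sp) in hs.
  rewrite !cov_normB //; try (apply/eqP; lra).
  rewrite lee_fin G_np ?G_np; try lra.
  rewrite opprD; exact: H2_main.
- rewrite !ltr0_sg // !mulrN1 !opprK.
  rewrite (ltr0_norm tn) in ht; rewrite (ltr0_norm sn) in hs.
  rewrite !cov_normB //; try (apply/eqP; lra).
  rewrite lee_fin G_nn ?G_nn; try lra.
  rewrite !opprD; exact: H1_main.
Qed.
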